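(* Let $n\ge 1$, $\theta^*\in\mathbb{R}^n$, and let $\phi:\mathbb{R}_{\ge0}\to\mathbb{R}^n$ be piecewise continuous and persistently exciting: there exist $M>0$, $T>0$, $\delta>0$ with $|\phi(t)|\le M$ for all $t\ge0$ and $\int_t^{t+T}\phi(s)\phi^T(s)\,ds\ge \delta I_n$ for all $t\ge 0$. Let $\beta,\gamma,\mu>0$ with $\beta\ge 2\gamma/\mu$, and set $\mathcal{N}_t:=1+\mu\,\phi^T(t)\phi(t)$. Consider the system in $x=(\theta,\vartheta)\in\mathbb{R}^n\times\mathbb{R}^n$ $$\dot\theta=-\beta(\theta-\vartheta)\mathcal{N}_t,\qquad \dot\vartheta=-\gamma\,\phi(t)\phi^T(t)(\theta-\theta^* ).$$ Then the point $(\theta^*,\theta^* )$ is uniformly globally asymptotically stable for this system. *)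

(* Defs.v *)
(* A vector of R^n is represented as a function v : nat -> R of which only the
   coordinates 0 .. n-1 are relevant (all definitions below only look at i < n). *)
From Stdlib Require Import Reals Lra Lia.
From Coquelicot Require Import Coquelicot.
Open Scope R_scope.

Fixpoint vsum (n : nat) (f : nat -> R) : R :=
  match n with
  | O => 0
  | S k => vsum k f + f k
  end.

Definition dot (n : nat) (u v : nat -> R) : R := vsum n (fun i => u i * v i).
Definition vnorm (n : nat) (v : nat -> R) : R := sqrt (dot n v v).
Definition vsub (u v : nat -> R) : nat -> R := fun i => u i - v i.

Definition piecewise_continuous (n : nat) (phi : R -> nat -> R) : Prop :=
  forall a b : R, 0 <= a -> a < b ->
  exists (k : nat) (p : nat -> R),
    p O = a /\ p k = b /\ (forall j, (j < k)%nat -> p j < p (S j)) /\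
    forall j, (j < k)%nat ->
      exists g : R -> nat -> R,
        forall i, (i < n)%nat ->
          (forall s, p j <= s <= p (S j) -> continuous (fun r => g r i) s) /\
          (forall s, p j < s < p (S j) -> phi s i = g s i).

Definition gram (phi : R -> nat -> R) (t T : R) (i j : nat) : R :=
  RInt (fun s => phi s i * phi s j) t (t + T).

Definition persistently_exciting (n : nat) (phi : R -> nat -> R) : Prop :=
  exists M T delta : R, 0 < M /\ 0 < T /\ 0 < delta /\
    (forall t, 0 <= t -> vnorm n (phi t) <= M) /\
    (forall t, 0 <= t -> forall v : nat -> R,
        vsum n (fun i => vsum n (fun j => v i * gram phi t T i j * v j))
        >= delta * dot n v v).

Definition Nt (n : nat) (mu : R) (phi : R -> nat -> R) (t : R) : R :=
  1 + mu * dot n (phi t) (phi t).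

(* (th, vt) is a (Caratheodory) solution on [t0, oo) of
     th' = -beta (th - vt) N_t,   vt' = -gamma phi phi^T (th - thstar),
   written in integral form (with Riemann-integrable right-hand sides). *)
Definition is_solution (n : nat) (beta gamma mu : R) (phi : R -> nat -> R)
  (thstar : nat -> R) (t0 : R) (x : R -> (nat -> R) * (nat -> R)) : Prop :=
  let th := fun s => fst (x s) in
  let vt := fun s => snd (x s) in
  forall t, t0 <= t -> forall i, (i < n)%nat ->
    let f1 := fun s => - beta * (th s i - vt s i) * Nt n mu phi s in
    let f2 := fun s => - gamma * phi s i * dot n (phi s) (vsub (th s) thstar) in
    ex_RInt f1 t0 t /\ ex_RInt f2 t0 t /\
    th t i = th t0 i + RInt f1 t0 t /\
    vt t i = vt t0 i + RInt f2 t0 t.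

(* Uniform global asymptotic stability (classical definition, e.g. Khalil):
   uniform stability + uniform global boundedness + uniform global attractivity,
   for a system given by its solution predicate [sol t0 x] (x a solution on
   [t0,oo), t0 >= 0) and the distance [err] of a state to the equilibrium. *)
Definition UGAS {X : Type} (sol : R -> (R -> X) -> Prop) (err : X -> R) : Prop :=
  (forall eps, 0 < eps -> exists d, 0 < d /\
     forall t0 x, 0 <= t0 -> sol t0 x -> err (x t0) < d ->
       forall t, t0 <= t -> err (x t) < eps) /\
  (forall r, 0 < r -> exists c, 0 < c /\
     forall t0 x, 0 <= t0 -> sol t0 x -> err (x t0) < r ->
       forall t, t0 <= t -> err (x t) < c) /\
  (forall r eps, 0 < r -> 0 < eps -> exists T, 0 < T /\
     forall t0 x, 0 <= t0 -> sol t0 x -> err (x t0) < r ->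
       forall t, t0 + T <= t -> err (x t) < eps).

Definition err_eq (n : nat) (thstar : nat -> R) (x : (nat -> R) * (nat -> R)) : R :=
  sqrt (dot n (vsub (fst x) thstar) (vsub (fst x) thstar)
        + dot n (vsub (snd x) thstar) (vsub (snd x) thstar)).

(* Submission.v *)
Require Import Defs.
From Stdlib Require Import Reals.
From Coquelicot Require Import Coquelicot.
From Stdlib Require Import Lra Lia Psatz FunctionalExtensionality.
Open Scope R_scope.


Lemma vsum_ext m f g : (forall i, (i < m)%nat -> f i = g i) -> vsum m f = vsum m g.
Proof. induction m; simpl; intros H; auto. rewrite IHm, H; auto; intros; apply H; lia. Qed.

Lemma vsum_le m f g : (forall i, (i < m)%nat -> f i <= g i) -> vsum m f <= vsum m g.
Proof. induction m; simpl; intros H; [lra|]. assert (H1 := H m (Nat.lt_succ_diag_r m)).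
 assert (vsum m f <= vsum m g) by (apply IHm; intros; apply H; lia). lra. Qed.

Lemma vsum_nonneg m f : (forall i, (i < m)%nat -> 0 <= f i) -> 0 <= vsum m f.
Proof. intros H. replace 0 with (vsum m (fun _ => 0)). apply vsum_le; auto.
 induction m; simpl; auto. rewrite IHm; [lra|]. intros; apply H; lia. Qed.

Lemma vsum_plus m f g : vsum m (fun i => f i + g i) = vsum m f + vsum m g.
Proof. induction m; simpl; [lra|]. rewrite IHm; lra. Qed.

Lemma vsum_scal m c f : vsum m (fun i => c * f i) = c * vsum m f.
Proof. induction m; simpl; [lra|]. rewrite IHm; lra. Qed.

Lemma vsum_opp m f : vsum m (fun i => - f i) = - vsum m f.
Proof. induction m; simpl; [lra|]. rewrite IHm; lra. Qed.

Lemma vsum_minus m f g : vsum m (fun i => f i - g i) = vsum m f - vsum m g.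
Proof. induction m; simpl; [lra|]. rewrite IHm; lra. Qed.

Lemma dot_comm m u v : dot m u v = dot m v u.
Proof. unfold dot. apply vsum_ext; intros; lra. Qed.

Lemma dot_nonneg m u : 0 <= dot m u u.
Proof. unfold dot. apply vsum_nonneg; intros; nra. Qed.

Lemma CS_aux A B C x y : 0 <= B -> 0 <= C -> A * A <= B * C ->
  (A + x * y) * (A + x * y) <= (B + x * x) * (C + y * y).
Proof. intros HB HC H.
 assert (2 * A * x * y <= B * (y * y) + C * (x * x)).
 { assert (Hs: 0 <= B * (y*y) + C * (x*x)) by nra.
   assert ((2*A*x*y) * (2*A*x*y) <= (B * (y*y) + C * (x*x)) * (B * (y*y) + C * (x*x))).
   { assert (4 * (A*A) * (x*x*(y*y)) <= 4 * (B*C) * (x*x*(y*y))) by (apply Rmult_le_compat_r; nra).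
     assert (Hq: 0 <= (B*(y*y) - C*(x*x)) * (B*(y*y) - C*(x*x))) by apply Rle_0_sqr.
     replace ((B * (y*y) + C * (x*x)) * (B * (y*y) + C * (x*x))) with
       ((B*(y*y) - C*(x*x)) * (B*(y*y) - C*(x*x)) + 4 * (B*C) * (x*x*(y*y))) by ring.
     replace ((2*A*x*y) * (2*A*x*y)) with (4 * (A*A) * (x*x*(y*y))) by ring. lra. }
   set (P := 2*A*x*y) in *. set (S := B * (y*y) + C * (x*x)) in *.
   destruct (Rle_dec P S); [lra|]. exfalso.
   assert (0 < (P - S) * (P + S)) by (apply Rmult_lt_0_compat; lra). nra. }
 nra. Qed.

Lemma CS m u v : dot m u v * dot m u v <= dot m u u * dot m v v.
Proof. unfold dot. induction m; simpl; [lra|].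
 apply CS_aux; auto; apply vsum_nonneg; intros; nra. Qed.

Lemma dot_plus_r m u v w : dot m u (fun i => v i + w i) = dot m u v + dot m u w.
Proof. unfold dot. rewrite <- vsum_plus. apply vsum_ext; intros; ring. Qed.

Lemma cplus (f g : R -> R) x : continuous f x -> continuous g x -> continuous (fun s => f s + g s) x.
Proof. intros; exact (continuous_plus f g x H H0). Qed.
Lemma cmult (f g : R -> R) x : continuous f x -> continuous g x -> continuous (fun s => f s * g s) x.
Proof. intros; exact (continuous_mult f g x H H0). Qed.
Lemma copp (f : R -> R) x : continuous f x -> continuous (fun s => - f s) x.
Proof. intros; exact (continuous_opp f x H). Qed.
Lemma cminus (f g : R -> R) x : continuous f x -> continuous g x -> continuous (fun s => f s - g s) x.
Proof. intros; exact (continuous_minus f g x H H0). Qed.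
Lemma cconst (c x : R) : continuous (fun _ : R => c) x.
Proof. exact (continuous_const c x). Qed.

Lemma cvsum (F : R -> nat -> R) x m : (forall i, (i < m)%nat -> continuous (fun s => F s i) x) ->
  continuous (fun s => vsum m (F s)) x.
Proof. induction m; simpl; intros H. apply cconst. apply cplus. apply IHm; intros; apply H; lia. apply H; lia. Qed.

Lemma dplus (f g : R -> R) x a b : is_derive f x a -> is_derive g x b -> is_derive (fun s => f s + g s) x (a + b).
Proof. intros; exact (is_derive_plus f g x a b H H0). Qed.
Lemma dmult (f g : R -> R) x a b : is_derive f x a -> is_derive g x b -> is_derive (fun s => f s * g s) x (a * g x + f x * b).
Proof. intros. exact (is_derive_mult f g x a b H H0 Rmult_comm). Qed.
Lemma dminus (f g : R -> R) x a b : is_derive f x a -> is_derive g x b -> is_derive (fun s => f s - g s) x (a - b).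
Proof. intros; exact (is_derive_minus f g x a b H H0). Qed.
Lemma dconst (c x : R) : is_derive (fun _ => c) x 0.
Proof. exact (is_derive_const c x). Qed.

Lemma dvsum (F dF : nat -> R -> R) x m : (forall i, (i < m)%nat -> is_derive (F i) x (dF i x)) ->
  is_derive (fun s => vsum m (fun i => F i s)) x (vsum m (fun i => dF i x)).
Proof. induction m; simpl; intros H. apply dconst. apply dplus. apply IHm; intros; apply H; lia. apply H; lia. Qed.


Lemma cont_of_pt (f : R -> R) x : continuity_pt f x -> continuous f x.
Proof. intros H; apply continuity_pt_filterlim; auto. Qed.
Lemma pt_of_cont (f : R -> R) x : continuous f x -> continuity_pt f x.
Proof. intros H; apply continuity_pt_filterlim; auto. Qed.

Lemma lip_cont (f : R -> R) K s : 0 <= K -> (forall u v, Rabs (f u - f v) <= K * Rabs (u - v)) -> continuous f s.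
Proof. intros HK H. apply cont_of_pt. intros eps Heps.
 exists (eps / (K + 1)). split. apply Rdiv_lt_0_compat; lra.
 intros y [_ Hy]. simpl in *. unfold R_dist in *.
 eapply Rle_lt_trans. apply H.
 apply Rle_lt_trans with (K * (eps / (K+1))). apply Rmult_le_compat_l; lra.
 apply Rlt_le_trans with ((K+1) * (eps / (K+1))). apply Rmult_lt_compat_r. apply Rdiv_lt_0_compat; lra. lra.
 right; field; lra. Qed.

Definition clamp (p q s : R) := Rmax p (Rmin q s).
Lemma clamp_lip p q u v : p <= q -> Rabs (clamp p q u - clamp p q v) <= 1 * Rabs (u - v).
Proof. intros; unfold clamp, Rmax, Rmin. repeat destruct Rle_dec; repeat destruct Rle_dec; split_Rabs; lra. Qed.
Lemma clamp_in p q s : p <= q -> p <= clamp p q s <= q.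
Proof. intros; unfold clamp, Rmax, Rmin. repeat destruct Rle_dec; lra. Qed.
Lemma clamp_id p q s : p <= s <= q -> clamp p q s = s.
Proof. intros; unfold clamp, Rmax, Rmin. repeat destruct Rle_dec; lra. Qed.
Lemma clamp_cont p q s : p <= q -> continuous (clamp p q) s.
Proof. intros; apply lip_cont with 1; [lra|]. intros; apply clamp_lip; auto. Qed.

Lemma decr (F D : R -> R) a b : a <= b -> (forall s, a < s < b -> is_derive F s (D s)) ->
  (forall s, a < s < b -> D s <= 0) -> (forall s, a <= s <= b -> continuous F s) -> F b <= F a.
Proof. intros Hab Hd HD Hc.
 destruct (MVT_gen F a b (fun s => Rmin 0 (D s))) as [c [Hc1 Hc2]].
 - intros s Hs. rewrite Rmin_left in Hs by lra. rewrite Rmax_right in Hs by lra.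
   rewrite Rmin_right by (apply HD; lra). apply Hd; lra.
 - intros s Hs. rewrite Rmin_left in Hs by lra. rewrite Rmax_right in Hs by lra. apply pt_of_cont, Hc; lra.
 - assert (Rmin 0 (D c) <= 0) by apply Rmin_l. nra. Qed.

Lemma exR_plus f g a b : ex_RInt f a b -> ex_RInt g a b -> ex_RInt (fun s => f s + g s) a b.
Proof. intros; exact (ex_RInt_plus f g a b H H0). Qed.
Lemma exR_scal f c a b : ex_RInt f a b -> ex_RInt (fun s => c * f s) a b.
Proof. intros; exact (ex_RInt_scal f a b c H). Qed.
Lemma exR_minus f g a b : ex_RInt f a b -> ex_RInt g a b -> ex_RInt (fun s => f s - g s) a b.
Proof. intros; exact (ex_RInt_minus f g a b H H0). Qed.
Lemma RI_plus f g a b : ex_RInt f a b -> ex_RInt g a b -> RInt (fun s => f s + g s) a b = RInt f a b + RInt g a b.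
Proof. intros; exact (RInt_plus f g a b H H0). Qed.
Lemma RI_minus f g a b : ex_RInt f a b -> ex_RInt g a b -> RInt (fun s => f s - g s) a b = RInt f a b - RInt g a b.
Proof. intros; exact (RInt_minus f g a b H H0). Qed.
Lemma RI_scal f c a b : ex_RInt f a b -> RInt (fun s => c * f s) a b = c * RInt f a b.
Proof. intros; exact (RInt_scal f a b c H). Qed.
Lemma RI_const c a b : RInt (fun _ => c) a b = (b - a) * c.
Proof. exact (RInt_const a b c). Qed.
Lemma RI_chasles f a b c : ex_RInt f a b -> ex_RInt f b c -> RInt f a b + RInt f b c = RInt f a c.
Proof. intros; exact (RInt_Chasles f a b c H H0). Qed.

Lemma RI_point (f : R -> R) a : RInt f a a = 0.
Proof. exact (RInt_point a f). Qed.

Lemma RI_ge0 f a b : a <= b -> ex_RInt f a b -> (forall s, a < s < b -> 0 <= f s) -> 0 <= RInt f a b.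
Proof. intros Hab Hf H. assert (RInt (fun _ => 0) a b <= RInt f a b).
 apply RInt_le; auto. apply ex_RInt_const. rewrite RI_const in H0. lra. Qed.

Lemma RI_le f g a b : a <= b -> ex_RInt f a b -> ex_RInt g a b -> (forall s, a < s < b -> f s <= g s) -> RInt f a b <= RInt g a b.
Proof. intros; apply RInt_le; auto. Qed.

Lemma RI_CS f u v : u <= v -> ex_RInt f u v -> ex_RInt (fun s => f s * f s) u v ->
  RInt f u v * RInt f u v <= (v - u) * RInt (fun s => f s * f s) u v.
Proof. intros Huv Hf Hf2. destruct (Req_dec u v) as [<-|Hne].
 - rewrite !RI_point. replace (u - u) with 0 by ring. lra.
 - set (I := RInt f u v). set (c := I / (v - u)).
   assert (H0 : 0 <= RInt (fun s => (f s * f s + (-2 * c) * f s) + c * c) u v).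
   { apply RI_ge0; auto. apply exR_plus. apply exR_plus; auto. apply exR_scal; auto. apply ex_RInt_const.
     intros s _. replace (f s * f s + -2 * c * f s + c * c) with ((f s - c) * (f s - c)) by ring. apply Rle_0_sqr. }
   rewrite RI_plus, RI_plus, RI_scal, RI_const in H0; auto.
   2: apply exR_scal; auto. 2: apply exR_plus; auto; apply exR_scal; auto. 2: apply ex_RInt_const.
   fold I in H0. unfold c in H0.
   assert (Hp : 0 < v - u) by lra.
   assert (E: -2*(I/(v-u))*I + (v-u)*(I/(v-u)*(I/(v-u))) = -(I*I/(v-u))) by (field; lra).
   rewrite Rplus_assoc, E in H0.
   set (J := RInt (fun s => f s * f s) u v) in *.
   assert (E2 : I*I = (v-u) * (I*I/(v-u))) by (field; lra). rewrite E2. apply Rmult_le_compat_l; lra. Qed.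

Lemma exR_vsum (F : nat -> R -> R) m a b : (forall i, (i < m)%nat -> ex_RInt (F i) a b) ->
  ex_RInt (fun s => vsum m (fun i => F i s)) a b.
Proof. induction m; simpl; intros H. apply ex_RInt_const. apply exR_plus. apply IHm; intros; apply H; lia. apply H; lia. Qed.

Lemma RI_vsum (F : nat -> R -> R) m a b : (forall i, (i < m)%nat -> ex_RInt (F i) a b) ->
  RInt (fun s => vsum m (fun i => F i s)) a b = vsum m (fun i => RInt (F i) a b).
Proof. induction m; simpl; intros H. rewrite RI_const; ring.
 assert (H1 : forall i, (i < m)%nat -> ex_RInt (F i) a b) by (intros; apply H; lia).
 rewrite RI_plus. rewrite IHm; auto. apply exR_vsum; auto. apply (H m); lia. Qed.


Lemma exR_cont (f : R -> R) a b : (forall z, Rmin a b <= z <= Rmax a b -> continuous f z) -> ex_RInt f a b.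
Proof. intros H. exact (@ex_RInt_continuous R_CompleteNormedModule f a b H). Qed.

Lemma loc_int (P : R -> Prop) p q s : p < s < q -> (forall y, p < y < q -> P y) -> locally s P.
Proof. intros Hs H. assert (He : 0 < Rmin (s - p) (q - s)) by (apply Rmin_pos; lra).
 exists (mkposreal _ He). intros y Hy. change (Rabs (y - s) < Rmin (s - p) (q - s)) in Hy.
 apply H. assert (Rmin (s - p) (q - s) <= s - p) by apply Rmin_l.
 assert (Rmin (s - p) (q - s) <= q - s) by apply Rmin_r. split_Rabs; lra. Qed.

Lemma int_lip (G f : R -> R) a t1 : a <= t1 ->
  (forall t, a <= t -> ex_RInt f a t /\ G t = G a + RInt f a t) ->
  exists L, 0 <= L /\ forall u v, a <= u <= t1 -> a <= v <= t1 -> Rabs (G u - G v) <= L * Rabs (u - v).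
Proof. intros Ha H. destruct (H t1 Ha) as [Hex _].
 destruct (ex_RInt_ub f a t1 Hex) as [M HM].
 exists (Rmax 0 M). split. apply Rmax_l.
 assert (Hw : forall u v, a <= v <= u -> u <= t1 -> Rabs (G u - G v) <= Rmax 0 M * Rabs (u - v)).
 { intros u v Hv Hu. destruct (H u) as [Hu1 Hu2]; [lra|]. destruct (H v) as [Hv1 Hv2]; [lra|].
   assert (Hvu : ex_RInt f v u) by (exact (ex_RInt_Chasles_2 f a v u ltac:(lra) Hu1)).
   assert (E : G u - G v = RInt f v u).
   { rewrite Hu2, Hv2, <- (RI_chasles f a v u); auto. lra. }
   rewrite E.
   rewrite (Rabs_right (u - v)) by lra. rewrite Rmult_comm.
   apply abs_RInt_le_const; [lra|auto|]. intros t Ht.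
   apply Rle_trans with M. apply HM. rewrite Rmin_left, Rmax_right; lra. apply Rmax_r. }
 intros u v Hu Hv. destruct (Rle_dec v u). apply Hw; lra.
 rewrite Rabs_minus_sym, (Rabs_minus_sym u). apply Hw; lra. Qed.

Section Sol.
Variables (n : nat) (beta gamma mu : R) (phi : R -> nat -> R) (thstar : nat -> R)
  (t0 : R) (x : R -> (nat -> R) * (nat -> R)).
Hypotheses (hbeta : 0 < beta) (hgamma : 0 < gamma) (hmu : 0 < mu) (hbg : 2 * gamma <= beta * mu)
  (ht0 : 0 <= t0).
Hypothesis hsol : is_solution n beta gamma mu phi thstar t0 x.
Hypothesis hpc : piecewise_continuous n phi.

Definition F1 (P : nat -> R) (X : (nat -> R) * (nat -> R)) i :=
  - beta * (fst X i - snd X i) * (1 + mu * dot n P P).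
Definition F2 (P : nat -> R) (X : (nat -> R) * (nat -> R)) i :=
  - gamma * P i * dot n P (vsub (fst X) thstar).
Definition wv (X : (nat -> R) * (nat -> R)) i := snd X i - thstar i.
Definition zv (X : (nat -> R) * (nat -> R)) i := fst X i - snd X i.
Definition Vf X := dot n (wv X) (wv X) + dot n (zv X) (zv X).
Definition qf P X := beta * dot n (zv X) (zv X) + gamma * (dot n P (wv X) * dot n P (wv X)).

Lemma solE t : t0 <= t -> forall i, (i < n)%nat ->
  ex_RInt (fun s => F1 (phi s) (x s) i) t0 t /\ ex_RInt (fun s => F2 (phi s) (x s) i) t0 t /\
  fst (x t) i = fst (x t0) i + RInt (fun s => F1 (phi s) (x s) i) t0 t /\
  snd (x t) i = snd (x t0) i + RInt (fun s => F2 (phi s) (x s) i) t0 t.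
Proof. intros Ht i Hi. exact (hsol t Ht i Hi). Qed.

Lemma fst_lip t1 i : t0 <= t1 -> (i < n)%nat -> exists L, 0 <= L /\ forall u v, t0 <= u <= t1 -> t0 <= v <= t1 ->
  Rabs (fst (x u) i - fst (x v) i) <= L * Rabs (u - v).
Proof. intros. apply (int_lip (fun s => fst (x s) i) (fun s => F1 (phi s) (x s) i)); auto.
 intros t Ht; destruct (solE t Ht i H0) as [? [? [? ?]]]; auto. Qed.
Lemma snd_lip t1 i : t0 <= t1 -> (i < n)%nat -> exists L, 0 <= L /\ forall u v, t0 <= u <= t1 -> t0 <= v <= t1 ->
  Rabs (snd (x u) i - snd (x v) i) <= L * Rabs (u - v).
Proof. intros. apply (int_lip (fun s => snd (x s) i) (fun s => F2 (phi s) (x s) i)); auto.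
 intros t Ht; destruct (solE t Ht i H0) as [? [? [? ?]]]; auto. Qed.

Definition cpres (E : (nat -> R) -> (nat -> R) * (nat -> R) -> R) :=
  forall (Pc : R -> nat -> R) (Xc : R -> (nat -> R) * (nat -> R)) s0,
  (forall i, (i < n)%nat -> continuous (fun s => Pc s i) s0) ->
  (forall i, (i < n)%nat -> continuous (fun s => fst (Xc s) i) s0) ->
  (forall i, (i < n)%nat -> continuous (fun s => snd (Xc s) i) s0) ->
  continuous (fun s => E (Pc s) (Xc s)) s0.

Definition Pcl (g : R -> nat -> R) p q s := fun i => if (i <? n)%nat then g (clamp p q s) i else phi s i.
Definition Xcl p q s := x (clamp p q s).

Definition piece (g : R -> nat -> R) p q := forall i, (i < n)%nat ->
  (forall s, p <= s <= q -> continuous (fun r => g r i) s) /\ (forall s, p < s < q -> phi s i = g s i).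

Lemma Pcl_cont g p q s i : p <= q -> piece g p q -> (i < n)%nat -> continuous (fun r => Pcl g p q r i) s.
Proof. intros Hpq Hg Hi. unfold Pcl. assert (E : (i <? n)%nat = true) by (apply Nat.ltb_lt; auto).
 rewrite E. apply (continuous_comp (clamp p q) (fun r => g r i)). apply clamp_cont; auto.
 apply (proj1 (Hg i Hi)). apply clamp_in; auto. Qed.

Lemma Pcl_eq g p q s : piece g p q -> p < s < q -> Pcl g p q s = phi s.
Proof. intros Hg Hs. apply functional_extensionality. intros i. unfold Pcl.
 destruct (Nat.ltb_spec i n); auto. rewrite clamp_id by lra. symmetry; apply (proj2 (Hg i H)); auto. Qed.

Lemma Xcl_fst_cont p q s i : t0 <= p <= q -> (i < n)%nat -> continuous (fun r => fst (Xcl p q r) i) s.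
Proof. intros Hp Hi. destruct (fst_lip q i) as [L [HL H]]; try lra; auto.
 apply lip_cont with L; auto. intros u v. unfold Xcl.
 eapply Rle_trans. apply H; split; try apply clamp_in; try lra;
   assert (HH := clamp_in p q u ltac:(lra)); assert (HH2 := clamp_in p q v ltac:(lra)); lra.
 apply Rmult_le_compat_l; auto. rewrite <- (Rmult_1_l (Rabs (u - v))). apply clamp_lip; lra. Qed.
Lemma Xcl_snd_cont p q s i : t0 <= p <= q -> (i < n)%nat -> continuous (fun r => snd (Xcl p q r) i) s.
Proof. intros Hp Hi. destruct (snd_lip q i) as [L [HL H]]; try lra; auto.
 apply lip_cont with L; auto. intros u v. unfold Xcl.
 eapply Rle_trans. apply H; split; try apply clamp_in; try lra;
   assert (HH := clamp_in p q u ltac:(lra)); assert (HH2 := clamp_in p q v ltac:(lra)); lra.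
 apply Rmult_le_compat_l; auto. rewrite <- (Rmult_1_l (Rabs (u - v))). apply clamp_lip; lra. Qed.

Lemma Xcl_eq p q s : p <= s <= q -> Xcl p q s = x s.
Proof. intros; unfold Xcl; rewrite clamp_id; auto. Qed.

Lemma piece_cont E g p q s : cpres E -> t0 <= p <= q -> piece g p q ->
  continuous (fun r => E (Pcl g p q r) (Xcl p q r)) s.
Proof. intros HE Hp Hg. apply HE; intros. apply Pcl_cont; auto; lra.
 apply Xcl_fst_cont; auto. apply Xcl_snd_cont; auto. Qed.

Lemma piece_ex E g p q : cpres E -> t0 <= p <= q -> piece g p q ->
  ex_RInt (fun r => E (phi r) (x r)) p q.
Proof. intros HE Hp Hg. apply ex_RInt_ext with (fun r => E (Pcl g p q r) (Xcl p q r)).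
 intros r Hr. rewrite Rmin_left in Hr by lra. rewrite Rmax_right in Hr by lra.
 rewrite Pcl_eq, Xcl_eq; auto; lra.
 apply exR_cont. intros; apply piece_cont; auto. Qed.

End Sol.


Ltac cstep := match goal with
  | |- continuous (fun s => _ + _) _ => apply cplus
  | |- continuous (fun s => _ - _) _ => apply cminus
  | |- continuous (fun s => _ * _) _ => apply cmult
  | |- continuous (fun s => - _) _ => apply copp
  | |- continuous (fun s => vsum _ _) _ => apply cvsum; intros
  | |- continuous (fun s => ?c) _ => apply cconst
  | H : forall i, (i < _)%nat -> continuous _ _ |- _ => apply H; lia
  end.
Ltac cauto := repeat cstep.

Section Sol2.
Variables (n : nat) (beta gamma mu : R) (phi : R -> nat -> R) (thstar : nat -> R)
  (t0 : R) (x : R -> (nat -> R) * (nat -> R)).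
Hypotheses (hbeta : 0 < beta) (hgamma : 0 < gamma) (hmu : 0 < mu) (hbg : 2 * gamma <= beta * mu)
  (ht0 : 0 <= t0).
Hypothesis hsol : is_solution n beta gamma mu phi thstar t0 x.
Hypothesis hpc : piecewise_continuous n phi.

Notation cpres := (cpres n).

Lemma partition_ind (a b : R) (k : nat) (p : nat -> R) (Q : R -> Prop) :
  p O = a -> p k = b -> (forall j, (j < k)%nat -> p j < p (S j)) ->
  Q a -> (forall j, (j < k)%nat -> Q (p j) -> Q (p (S j))) -> Q b.
Proof. intros H0 Hk Hinc Ha Hs. rewrite <- Hk.
 assert (forall j, (j <= k)%nat -> Q (p j)). { induction j; intros. rewrite H0; auto. apply Hs. lia. apply IHj; lia. }
 apply H; lia. Qed.

Lemma partition_ge (a b : R) (k : nat) (p : nat -> R) :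
  p O = a -> p k = b -> (forall j, (j < k)%nat -> p j < p (S j)) -> forall j, (j <= k)%nat -> a <= p j <= b.
Proof. intros H0 Hk Hinc.
 assert (Ha : forall j, (j <= k)%nat -> a <= p j). { induction j; intros. rewrite H0; lra. assert (p j < p (S j)) by (apply Hinc; lia). assert (a <= p j) by (apply IHj; lia). lra. }
 assert (Hb : forall d j, (j + d = k)%nat -> p j <= b). { induction d; intros. replace j with k by lia. lra.
   assert (p j < p (S j)) by (apply Hinc; lia). assert (p (S j) <= b) by (apply IHd; lia). lra. }
 intros j Hj. split. auto. apply (Hb (k - j)%nat); lia. Qed.

Lemma glob_ex E a b : cpres E -> t0 <= a <= b -> ex_RInt (fun r => E (phi r) (x r)) a b.
Proof. intros HE Hab. destruct (Req_dec a b) as [<-|Hne]. apply ex_RInt_point.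
 destruct (hpc a b) as [k [p [H0 [Hk [Hinc Hpc]]]]]; try lra.
 assert (Hge := partition_ge a b k p H0 Hk Hinc).
 assert (forall j, (j <= k)%nat -> ex_RInt (fun r => E (phi r) (x r)) a (p j)).
 { induction j; intros. rewrite H0; apply ex_RInt_point.
   apply ex_RInt_Chasles with (p j). apply IHj; lia.
   destruct (Hpc j) as [g Hg]; [lia|].
   apply (piece_ex n beta gamma mu phi thstar t0 x hsol E g); auto.
   assert (p j < p (S j)) by (apply Hinc; lia). assert (a <= p j <= b) by (apply Hge; lia). lra. }
 rewrite <- Hk. apply H; lia. Qed.

Lemma cp_fst i : (i < n)%nat -> cpres (fun P X => fst X i).
Proof. intros Hi Pc Xc s0 HP HX HY. apply HX; auto. Qed.
Lemma cp_snd i : (i < n)%nat -> cpres (fun P X => snd X i).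
Proof. intros Hi Pc Xc s0 HP HX HY. apply HY; auto. Qed.
Lemma cp_P i : (i < n)%nat -> cpres (fun P X => P i).
Proof. intros Hi Pc Xc s0 HP HX HY. apply HP; auto. Qed.

Lemma cp_F1 i : (i < n)%nat -> cpres (fun P X => F1 n beta mu P X i).
Proof. intros Hi Pc Xc s0 HP HX HY. unfold F1, dot. cauto. Qed.
Lemma cp_F2 i : (i < n)%nat -> cpres (fun P X => F2 n gamma thstar P X i).
Proof. intros Hi Pc Xc s0 HP HX HY. unfold F2, dot, vsub. cauto. Qed.
Lemma cp_q : cpres (fun P X => qf n beta gamma thstar P X).
Proof. intros Pc Xc s0 HP HX HY. unfold qf, dot, zv, wv. cauto. Qed.
Lemma cp_V : cpres (fun P X => Vf n thstar X).
Proof. intros Pc Xc s0 HP HX HY. unfold Vf, dot, zv, wv. cauto. Qed.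

End Sol2.


Lemma RI_correct (f : R -> R) a b : ex_RInt f a b -> is_RInt f a b (RInt f a b).
Proof. intros H. exact (@RInt_correct R_CompleteNormedModule f a b H). Qed.

Section Sol3.
Variables (n : nat) (beta gamma mu : R) (phi : R -> nat -> R) (thstar : nat -> R)
  (t0 : R) (x : R -> (nat -> R) * (nat -> R)).
Hypotheses (hbeta : 0 < beta) (hgamma : 0 < gamma) (hmu : 0 < mu) (hbg : 2 * gamma <= beta * mu)
  (ht0 : 0 <= t0).
Hypothesis hsol : is_solution n beta gamma mu phi thstar t0 x.
Hypothesis hpc : piecewise_continuous n phi.

Notation F1 := (F1 n beta mu).
Notation F2 := (F2 n gamma thstar).
Notation wv := (wv thstar).
Notation zv := zv.
Notation Vf := (Vf n thstar).
Notation qf := (qf n beta gamma thstar).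

Definition dVe P X := vsum n (fun i => F2 P X i * wv X i + wv X i * F2 P X i) +
  vsum n (fun i => (F1 P X i - F2 P X i) * zv X i + zv X i * (F1 P X i - F2 P X i)).

Lemma alg P X : dVe P X + 2 * qf P X <= 0.
Proof. unfold dVe, qf.
 set (A := dot n P (wv X)). set (B := dot n P (zv X)). set (Z := dot n (zv X) (zv X)).
 set (PP := dot n P P). set (Eq := dot n P (vsub (fst X) thstar)).
 assert (HE : Eq = A + B). { unfold Eq, A, B. rewrite <- dot_plus_r. unfold dot. apply vsum_ext. intros.
   unfold vsub, wv, Submission.wv, zv. ring. }
 assert (H1 : vsum n (fun i => F2 P X i * wv X i + wv X i * F2 P X i) = (-2 * gamma * Eq) * A).
 { unfold A, dot. rewrite <- vsum_scal. apply vsum_ext; intros. unfold Submission.F2. fold Eq. ring. }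
 assert (H2 : vsum n (fun i => (F1 P X i - F2 P X i) * zv X i + zv X i * (F1 P X i - F2 P X i))
   = (-2 * beta * (1 + mu * PP)) * Z + (2 * gamma * Eq) * B).
 { unfold Z, B, dot. rewrite <- !vsum_scal, <- vsum_plus. apply vsum_ext; intros.
   unfold Submission.F1, Submission.F2, zv. fold Eq. fold (dot n P P). fold PP. ring. }
 rewrite H1, H2, HE.
 assert (HCS : B * B <= PP * Z) by apply CS.
 assert (HPP : 0 <= PP) by apply dot_nonneg. assert (HZ : 0 <= Z) by apply dot_nonneg.
 assert (0 <= PP * Z) by nra.
 assert (gamma * (B*B) <= gamma * (PP * Z)) by (apply Rmult_le_compat_l; lra).
 assert (2 * gamma * (PP * Z) <= beta * mu * (PP * Z)) by (apply Rmult_le_compat_r; lra).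
 nra. Qed.

Lemma deriv_fst g p q s i : t0 <= p -> piece n phi g p q -> p < s < q -> (i < n)%nat ->
  is_derive (fun r => fst (x r) i) s (F1 (phi s) (x s) i).
Proof. intros Hp Hg Hs Hi. set (f := fun r => F1 (phi r) (x r) i).
 apply is_derive_ext_loc with (fun r => fst (x t0) i + RInt f t0 r).
 - apply (loc_int _ p q s Hs). intros y Hy. destruct (solE n beta gamma mu phi thstar t0 x hsol y ltac:(lra) i Hi) as [Ha [Hb [Hc Hd]]]. symmetry; assumption.
 - apply is_derive_ext with (fun r => fst (x t0) i + RInt f t0 r); [intros; reflexivity|]. replace (F1 (phi s) (x s) i) with (0 + f s) by (unfold f; ring). apply dplus. apply dconst.
   apply (is_derive_RInt f (fun r => RInt f t0 r) t0 s).
   + apply (loc_int _ p q s Hs). intros y Hy. apply RI_correct.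
     destruct (solE n beta gamma mu phi thstar t0 x hsol y ltac:(lra) i Hi) as [Ha [Hb [Hc Hd]]]. assumption.
   + apply continuous_ext_loc with (fun r => F1 (Pcl n phi g p q r) (Xcl x p q r) i).
     apply (loc_int _ p q s Hs). intros y Hy. unfold f. rewrite Pcl_eq, Xcl_eq; auto; lra.
     apply (piece_cont n beta gamma mu phi thstar t0 x hsol (fun P X => F1 P X i) g p q s); auto. apply cp_F1; auto. lra. Qed.

Lemma deriv_snd g p q s i : t0 <= p -> piece n phi g p q -> p < s < q -> (i < n)%nat ->
  is_derive (fun r => snd (x r) i) s (F2 (phi s) (x s) i).
Proof. intros Hp Hg Hs Hi. set (f := fun r => F2 (phi r) (x r) i).
 apply is_derive_ext_loc with (fun r => snd (x t0) i + RInt f t0 r).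
 - apply (loc_int _ p q s Hs). intros y Hy. destruct (solE n beta gamma mu phi thstar t0 x hsol y ltac:(lra) i Hi) as [Ha [Hb [Hc Hd]]]. symmetry; assumption.
 - apply is_derive_ext with (fun r => snd (x t0) i + RInt f t0 r); [intros; reflexivity|]. replace (F2 (phi s) (x s) i) with (0 + f s) by (unfold f; ring). apply dplus. apply dconst.
   apply (is_derive_RInt f (fun r => RInt f t0 r) t0 s).
   + apply (loc_int _ p q s Hs). intros y Hy. apply RI_correct.
     destruct (solE n beta gamma mu phi thstar t0 x hsol y ltac:(lra) i Hi) as [Ha [Hb [Hc Hd]]]. assumption.
   + apply continuous_ext_loc with (fun r => F2 (Pcl n phi g p q r) (Xcl x p q r) i).
     apply (loc_int _ p q s Hs). intros y Hy. unfold f. rewrite Pcl_eq, Xcl_eq; auto; lra.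
     apply (piece_cont n beta gamma mu phi thstar t0 x hsol (fun P X => F2 P X i) g p q s); auto. apply cp_F2; auto. lra. Qed.

Lemma deriv_V g p q s : t0 <= p -> piece n phi g p q -> p < s < q ->
  is_derive (fun r => Vf (x r)) s (dVe (phi s) (x s)).
Proof. intros Hp Hg Hs. unfold Submission.Vf, dVe, dot.
 apply dplus.
 - apply (dvsum (fun i r => wv (x r) i * wv (x r) i) (fun i r => F2 (phi r) (x r) i * wv (x r) i + wv (x r) i * F2 (phi r) (x r) i)).
   intros i Hi. apply dmult; unfold Submission.wv;
   (replace (F2 (phi s) (x s) i) with (F2 (phi s) (x s) i - 0) by ring; apply dminus; [eapply deriv_snd; eauto | apply dconst]).
 - apply (dvsum (fun i r => zv (x r) i * zv (x r) i) (fun i r => (F1 (phi r) (x r) i - F2 (phi r) (x r) i) * zv (x r) i + zv (x r) i * (F1 (phi r) (x r) i - F2 (phi r) (x r) i))).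
   intros i Hi. apply dmult; unfold Submission.zv; apply dminus; [eapply deriv_fst; eauto | eapply deriv_snd; eauto|eapply deriv_fst; eauto | eapply deriv_snd; eauto]. Qed.

End Sol3.


Lemma loc_all (P : R -> Prop) s : (forall y, P y) -> locally s P.
Proof. intros H. exists (mkposreal 1 Rlt_0_1). intros; apply H. Qed.

Lemma dcont (f : R -> R) y l : is_derive f y l -> continuous f y.
Proof. intros H. apply (@ex_derive_continuous R_AbsRing R_NormedModule f y). exists l; exact H. Qed.

Section Sol4.
Variables (n : nat) (beta gamma mu : R) (phi : R -> nat -> R) (thstar : nat -> R)
  (t0 : R) (x : R -> (nat -> R) * (nat -> R)).
Hypotheses (hbeta : 0 < beta) (hgamma : 0 < gamma) (hmu : 0 < mu) (hbg : 2 * gamma <= beta * mu)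
  (ht0 : 0 <= t0).
Hypothesis hsol : is_solution n beta gamma mu phi thstar t0 x.
Hypothesis hpc : piecewise_continuous n phi.

Notation Vf := (Vf n thstar).
Notation qf := (qf n beta gamma thstar).

Lemma qf_nonneg P X : 0 <= qf P X.
Proof. unfold Submission.qf. assert (0 <= dot n (zv X) (zv X)) by apply dot_nonneg.
 assert (0 <= dot n P (wv thstar X) * dot n P (wv thstar X)) by apply Rle_0_sqr. nra. Qed.

Lemma piece_mono g p q : t0 <= p < q -> piece n phi g p q ->
  Vf (x q) + 2 * RInt (fun r => qf (phi r) (x r)) p q <= Vf (x p).
Proof. intros Hp Hg.
 set (qc := fun r => qf (Pcl n phi g p q r) (Xcl x p q r)).
 assert (Hqc : forall r, continuous qc r).
 { intros r. apply (piece_cont n beta gamma mu phi thstar t0 x hsol (fun P X => qf P X) g p q r); auto.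
   apply cp_q. lra. }
 assert (Hdi : forall r, is_derive (fun u => RInt qc p u) r (qc r)).
 { intros r. apply (is_derive_RInt qc (fun u => RInt qc p u) p r); auto.
   apply loc_all. intros y. apply RI_correct. apply exR_cont. intros; auto. }
 set (H := fun r => Vf (Xcl x p q r) + 2 * RInt qc p r).
 assert (HH : H q <= H p).
 { apply (decr H (fun r => dVe n beta gamma mu thstar (phi r) (x r) + 2 * qf (phi r) (x r))); [lra| | |].
   - intros r Hr. unfold H. apply dplus.
     + apply is_derive_ext_loc with (fun u => Vf (x u)).
       apply (loc_int _ p q r Hr). intros y Hy. rewrite Xcl_eq; auto; lra.
       eapply deriv_V; eauto. lra.
     + replace (qf (phi r) (x r)) with (qc r). apply is_derive_scal; auto.
       unfold qc. rewrite Pcl_eq, Xcl_eq; auto; lra.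
   - intros r Hr. apply alg; auto.
   - intros r Hr. unfold H. apply cplus.
     + apply (piece_cont n beta gamma mu phi thstar t0 x hsol (fun P X => Vf X) g p q r); auto.
       apply cp_V. lra.
     + apply cmult. apply cconst. apply (dcont _ r (qc r)); auto. }
 unfold H in HH. rewrite RI_point, Xcl_eq, Xcl_eq in HH; try lra.
 replace (RInt (fun r => qf (phi r) (x r)) p q) with (RInt qc p q). lra.
 apply RInt_ext. intros r Hr. rewrite Rmin_left in Hr by lra. rewrite Rmax_right in Hr by lra.
 unfold qc. rewrite Pcl_eq, Xcl_eq; auto; lra. Qed.

Lemma mono a b : t0 <= a <= b ->
  Vf (x b) + 2 * RInt (fun r => qf (phi r) (x r)) a b <= Vf (x a).
Proof. intros Hab. destruct (Req_dec a b) as [<-|Hne]. rewrite RI_point; lra.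
 destruct (hpc a b) as [k [p [H0 [Hk [Hinc Hpc]]]]]; try lra.
 assert (Hge := partition_ge a b k p H0 Hk Hinc).
 assert (forall j, (j <= k)%nat -> Vf (x (p j)) + 2 * RInt (fun r => qf (phi r) (x r)) a (p j) <= Vf (x a)).
 { induction j; intros. rewrite H0, RI_point; lra.
   assert (p j < p (S j)) by (apply Hinc; lia). assert (a <= p j <= b) by (apply Hge; lia).
   destruct (Hpc j) as [g Hg]; [lia|].
   assert (Hm := piece_mono g (p j) (p (S j)) ltac:(lra) Hg).
   rewrite <- (RI_chasles _ a (p j) (p (S j))).
   assert (IH := IHj ltac:(lia)). lra.
   apply (glob_ex n beta gamma mu phi thstar t0 x ht0 hsol hpc (fun P X => qf P X)). apply cp_q. lra.
   apply (glob_ex n beta gamma mu phi thstar t0 x ht0 hsol hpc (fun P X => qf P X)). apply cp_q. lra. }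
 rewrite <- Hk. apply H; lia. Qed.

Lemma q_ex a b : t0 <= a <= b -> ex_RInt (fun r => qf (phi r) (x r)) a b.
Proof. intros. apply (glob_ex n beta gamma mu phi thstar t0 x ht0 hsol hpc (fun P X => qf P X)). apply cp_q. lra. Qed.

Lemma q_int_nonneg a b : t0 <= a <= b -> 0 <= RInt (fun r => qf (phi r) (x r)) a b.
Proof. intros. apply RI_ge0. lra. apply q_ex; auto. intros; apply qf_nonneg. Qed.

Lemma V_mono a b : t0 <= a <= b -> Vf (x b) <= Vf (x a).
Proof. intros. assert (H1 := mono a b H). assert (H2 := q_int_nonneg a b H). lra. Qed.

End Sol4.


Lemma vsum_mult n f g : vsum n f * vsum n g = vsum n (fun i => vsum n (fun j => f i * g j)).
Proof. rewrite (Rmult_comm (vsum n f)). rewrite <- (vsum_scal n (vsum n g) f). apply vsum_ext. intros i _.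
 rewrite Rmult_comm. rewrite <- vsum_scal. apply vsum_ext; intros; ring. Qed.

Section Alg.
Variables (n : nat) (beta gamma mu K : R) (thstar : nat -> R).
Hypotheses (hbeta : 0 < beta) (hgamma : 0 < gamma) (hmu : 0 < mu) (hK0 : 0 <= K).

Definition c3 := 2 * (gamma * gamma) * K * (1 / gamma + K / beta).
Definition c2 := 2 * beta * ((1 + mu * K) * (1 + mu * K)) + 2 * c3.

Lemma c3_nonneg : 0 <= c3.
Proof. unfold c3. assert (0 < 1/gamma) by (apply Rdiv_lt_0_compat; lra).
 assert (0 <= K/beta) by (apply Rdiv_le_0_compat; lra).
 assert (0 <= gamma * gamma) by nra. apply Rmult_le_pos; [|lra]. nra. Qed.
Lemma c2_nonneg : 0 <= c2.
Proof. unfold c2. assert (H := c3_nonneg). assert (0 <= (1 + mu*K) * (1+mu*K)) by nra. nra. Qed.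

Lemma sumF2 P X : dot n P P <= K ->
  vsum n (fun i => F2 n gamma thstar P X i * F2 n gamma thstar P X i) <= c3 * qf n beta gamma thstar P X.
Proof. intros HP. unfold F2, qf.
 set (A := dot n P (wv thstar X)). set (B := dot n P (zv X)). set (Z := dot n (zv X) (zv X)).
 set (PP := dot n P P) in *. set (Eq := dot n P (vsub (fst X) thstar)).
 assert (HE : Eq = A + B). { unfold Eq, A, B. rewrite <- dot_plus_r. unfold dot. apply vsum_ext. intros.
   unfold vsub, wv, zv. ring. }
 assert (H1 : vsum n (fun i => - gamma * P i * Eq * (- gamma * P i * Eq)) = (gamma * gamma * (Eq * Eq)) * PP).
 { unfold PP, dot. rewrite <- vsum_scal. apply vsum_ext; intros. ring. }
 rewrite H1, HE.
 assert (HCS : B * B <= PP * Z) by apply CS.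
 assert (HPP : 0 <= PP) by apply dot_nonneg. assert (HZ : 0 <= Z) by apply dot_nonneg.
 assert (HB : B * B <= K * Z) by (apply Rle_trans with (PP * Z); [auto| apply Rmult_le_compat_r; lra]).
 assert (Hab : (A + B) * (A + B) <= 2 * (A * A) + 2 * (K * Z)) by (assert (0 <= (A - B) * (A - B)) by apply Rle_0_sqr; nra).
 assert (Hg2 : 0 <= gamma * gamma) by nra.
 assert (S1 : gamma * gamma * ((A + B) * (A + B)) * PP <= gamma * gamma * (2 * (A * A) + 2 * (K * Z)) * K).
 { apply Rle_trans with (gamma * gamma * ((A + B) * (A + B)) * K). apply Rmult_le_compat_l; [|lra].
   apply Rmult_le_pos; [lra|apply Rle_0_sqr]. apply Rmult_le_compat_r; [lra|]. apply Rmult_le_compat_l; lra. }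
 eapply Rle_trans; [apply S1|]. unfold c3.
 replace (2 * (gamma * gamma) * K * (1 / gamma + K / beta) * (beta * Z + gamma * (A * A)))
   with (gamma * gamma * (2 * (A * A) + 2 * (K * Z)) * K + 2 * gamma * K * (beta * Z) + 2 * (gamma * gamma * gamma) * (K * K) / beta * (A * A))
   by (field; lra).
 assert (0 <= 2 * gamma * K * (beta * Z)) by (apply Rmult_le_pos; nra).
 assert (0 <= 2 * (gamma * gamma * gamma) * (K * K) / beta * (A * A)).
 { apply Rmult_le_pos; [|apply Rle_0_sqr]. apply Rdiv_le_0_compat; [|lra]. assert (0 <= K*K) by nra.
   assert (0 <= gamma*gamma*gamma) by nra. nra. }
 lra. Qed.

Lemma sumG P X : dot n P P <= K ->
  vsum n (fun i => (F1 n beta mu P X i - F2 n gamma thstar P X i) * (F1 n beta mu P X i - F2 n gamma thstar P X i))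
  <= c2 * qf n beta gamma thstar P X.
Proof. intros HP.
 apply Rle_trans with (vsum n (fun i => 2 * (F1 n beta mu P X i * F1 n beta mu P X i)) +
                       vsum n (fun i => 2 * (F2 n gamma thstar P X i * F2 n gamma thstar P X i))).
 { rewrite <- vsum_plus. apply vsum_le. intros. set (a := F1 n beta mu P X i). set (b := F2 n gamma thstar P X i).
   assert (0 <= (a + b) * (a + b)) by apply Rle_0_sqr. nra. }
 rewrite !vsum_scal. assert (H2 := sumF2 P X HP).
 assert (H1 : vsum n (fun i => F1 n beta mu P X i * F1 n beta mu P X i) <= beta * ((1 + mu * K) * (1 + mu * K)) * qf n beta gamma thstar P X).
 { unfold F1, qf. set (PP := dot n P P) in *. set (Z := dot n (zv X) (zv X)).
   assert (E : vsum n (fun i => - beta * (fst X i - snd X i) * (1 + mu * PP) * (- beta * (fst X i - snd X i) * (1 + mu * PP)))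
      = (beta * beta * ((1 + mu * PP) * (1 + mu * PP))) * Z).
   { unfold Z, dot. rewrite <- vsum_scal. apply vsum_ext; intros. unfold zv. ring. }
   rewrite E. assert (HZ : 0 <= Z) by apply dot_nonneg. assert (HPP : 0 <= PP) by apply dot_nonneg.
   set (A := dot n P (wv thstar X)). assert (0 <= A * A) by apply Rle_0_sqr.
   assert (HN : (1 + mu * PP) * (1 + mu * PP) <= (1 + mu * K) * (1 + mu * K)).
   { assert (1 + mu * PP <= 1 + mu * K) by (apply Rplus_le_compat_l; apply Rmult_le_compat_l; lra).
     assert (1 <= 1 + mu * PP) by nra. nra. }
   assert (0 <= (1 + mu * K) * (1 + mu * K)) by apply Rle_0_sqr.
   assert (beta * beta * ((1 + mu * PP) * (1 + mu * PP)) * Z <= beta * beta * ((1 + mu * K) * (1 + mu * K)) * Z).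
   { apply Rmult_le_compat_r; auto. apply Rmult_le_compat_l; nra. }
   assert (0 <= beta * ((1 + mu * K) * (1 + mu * K)) * (gamma * (A * A))).
   { apply Rmult_le_pos; nra. }
   nra. }
 unfold c2. assert (0 <= qf n beta gamma thstar P X) by (apply qf_nonneg; auto). nra. Qed.

End Alg.


Section Win.
Variables (n : nat) (beta gamma mu : R) (phi : R -> nat -> R) (thstar : nat -> R)
  (t0 : R) (x : R -> (nat -> R) * (nat -> R)).
Hypotheses (hbeta : 0 < beta) (hgamma : 0 < gamma) (hmu : 0 < mu) (hbg : 2 * gamma <= beta * mu)
  (ht0 : 0 <= t0).
Hypothesis hsol : is_solution n beta gamma mu phi thstar t0 x.
Hypothesis hpc : piecewise_continuous n phi.
Variables (K T delta : R).
Hypotheses (hK0 : 0 <= K) (hK : forall t, 0 <= t -> dot n (phi t) (phi t) <= K) (hT : 0 < T) (hd : 0 < delta).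
Hypothesis hPE : forall t, 0 <= t -> forall v : nat -> R,
  vsum n (fun i => vsum n (fun j => v i * gram phi t T i j * v j)) >= delta * dot n v v.

Notation F1 := (F1 n beta mu).
Notation F2 := (F2 n gamma thstar).
Notation q := (fun r => qf n beta gamma thstar (phi r) (x r)).

Lemma GE E a b : cpres n E -> t0 <= a <= b -> ex_RInt (fun r => E (phi r) (x r)) a b.
Proof. intros H H0; exact (glob_ex n beta gamma mu phi thstar t0 x ht0 hsol hpc E a b H H0). Qed.

Lemma exF1 i a b : (i < n)%nat -> t0 <= a <= b -> ex_RInt (fun r => F1 (phi r) (x r) i) a b.
Proof. intros. apply (GE (fun P X => F1 P X i)); auto. apply cp_F1; auto. Qed.
Lemma exF2 i a b : (i < n)%nat -> t0 <= a <= b -> ex_RInt (fun r => F2 (phi r) (x r) i) a b.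
Proof. intros. apply (GE (fun P X => F2 P X i)); auto. apply cp_F2; auto. Qed.

Lemma w_diff t s i : t0 <= t <= s -> (i < n)%nat ->
  wv thstar (x s) i - wv thstar (x t) i = RInt (fun r => F2 (phi r) (x r) i) t s.
Proof. intros Hts Hi.
 destruct (solE n beta gamma mu phi thstar t0 x hsol s ltac:(lra) i Hi) as [_ [Hs2 [_ Hs4]]].
 destruct (solE n beta gamma mu phi thstar t0 x hsol t ltac:(lra) i Hi) as [_ [Ht2 [_ Ht4]]].
 unfold wv. rewrite Hs4, Ht4. rewrite <- (RI_chasles _ t0 t s); auto. lra. apply exF2; auto. Qed.

Lemma z_diff t s i : t0 <= t <= s -> (i < n)%nat ->
  zv (x s) i - zv (x t) i = RInt (fun r => F1 (phi r) (x r) i - F2 (phi r) (x r) i) t s.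
Proof. intros Hts Hi.
 destruct (solE n beta gamma mu phi thstar t0 x hsol s ltac:(lra) i Hi) as [Hs1 [Hs2 [Hs3 Hs4]]].
 destruct (solE n beta gamma mu phi thstar t0 x hsol t ltac:(lra) i Hi) as [Ht1 [Ht2 [Ht3 Ht4]]].
 rewrite RI_minus; [| apply exF1; [auto|lra] | apply exF2; [auto|lra]].
 unfold zv. rewrite Hs3, Hs4, Ht3, Ht4.
 rewrite <- (RI_chasles _ t0 t s); auto. rewrite <- (RI_chasles (fun r => F2 (phi r) (x r) i) t0 t s); auto.
 lra. apply exF2; auto. apply exF1; auto. Qed.

Lemma incr_bound (G : nat -> R -> R) c t s : t0 <= t -> t <= s <= t + T -> 0 <= c ->
  (forall i, (i < n)%nat -> ex_RInt (G i) t (t + T) /\ ex_RInt (fun r => G i r * G i r) t (t + T)) ->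
  (forall r, t < r < t + T -> vsum n (fun i => G i r * G i r) <= c * q r) ->
  vsum n (fun i => RInt (G i) t s * RInt (G i) t s) <= T * c * RInt q t (t + T).
Proof. intros Ht Hs Hc HG Hb.
 apply Rle_trans with (vsum n (fun i => T * RInt (fun r => G i r * G i r) t (t + T))).
 - apply vsum_le. intros i Hi. destruct (HG i Hi) as [H1 H2].
   assert (E1 : ex_RInt (G i) t s) by (exact (ex_RInt_Chasles_1 (G i) t s (t+T) ltac:(lra) H1)).
   assert (E2 : ex_RInt (fun r => G i r * G i r) t s) by (exact (ex_RInt_Chasles_1 _ t s (t+T) ltac:(lra) H2)).
   assert (E3 : ex_RInt (fun r => G i r * G i r) s (t + T)) by (exact (ex_RInt_Chasles_2 _ t s (t+T) ltac:(lra) H2)).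
   eapply Rle_trans. apply RI_CS; auto. lra.
   rewrite <- (RI_chasles _ t s (t + T)); auto.
   assert (0 <= RInt (fun r => G i r * G i r) t s) by (apply RI_ge0; auto; lra || (intros; apply Rle_0_sqr)).
   assert (0 <= RInt (fun r => G i r * G i r) s (t + T)) by (apply RI_ge0; auto; lra || (intros; apply Rle_0_sqr)).
   assert ((s - t) * RInt (fun r => G i r * G i r) t s <= T * RInt (fun r => G i r * G i r) t s)
     by (apply Rmult_le_compat_r; lra).
   nra.
 - rewrite vsum_scal. rewrite Rmult_assoc. apply Rmult_le_compat_l; [lra|].
   rewrite <- RI_vsum by (intros; apply HG; auto).
   rewrite <- RI_scal. apply RI_le; [lra| | |auto].
   apply exR_vsum; intros; apply HG; auto. apply exR_scal. apply (q_ex n beta gamma mu phi thstar t0 x ht0 hsol hpc); lra.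
   apply (q_ex n beta gamma mu phi thstar t0 x ht0 hsol hpc); lra. Qed.

Lemma int_le_bound f C2 C3 t : t0 <= t -> ex_RInt f t (t + T) ->
  (forall r, t < r < t + T -> f r <= C2 * q r + C3) ->
  RInt f t (t + T) <= C2 * RInt q t (t + T) + T * C3.
Proof. intros Ht Hf Hb.
 assert (Hq : ex_RInt q t (t + T)) by (apply (q_ex n beta gamma mu phi thstar t0 x ht0 hsol hpc); lra).
 eapply Rle_trans. apply (RI_le f (fun r => C2 * q r + C3)); auto. lra.
 apply exR_plus. apply exR_scal; auto. apply ex_RInt_const.
 rewrite RI_plus, RI_scal, RI_const; auto. replace (t + T - t) with T by ring. lra.
 apply exR_scal; auto. apply ex_RInt_const. Qed.

Lemma cp_G i : (i < n)%nat -> cpres n (fun P X => F1 P X i - F2 P X i).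
Proof. intros Hi Pc Xc s0 HP HX HY. apply cminus. apply (cp_F1 n beta mu i Hi); auto. apply (cp_F2 n gamma thstar i Hi); auto. Qed.
Lemma cp_sq E : cpres n E -> cpres n (fun P X => E P X * E P X).
Proof. intros HE Pc Xc s0 HP HX HY. apply cmult; apply HE; auto. Qed.

Lemma z_bound t : t0 <= t ->
  T * dot n (zv (x t)) (zv (x t)) <= (2 / beta + 2 * T * T * c2 beta gamma mu K) * RInt q t (t + T).
Proof. intros Ht. set (D := RInt q t (t + T)). set (Zt := dot n (zv (x t)) (zv (x t))).
 assert (HD : 0 <= D) by (apply (q_int_nonneg n beta gamma mu phi thstar t0 x hbeta hgamma ht0 hsol hpc); lra).
 assert (Hc2 := c2_nonneg beta gamma mu K hbeta hgamma hmu hK0).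
 assert (Hpt : forall r, t < r < t + T -> beta * Zt <= 2 * q r + 2 * beta * T * c2 beta gamma mu K * D).
 { intros r Hr.
   assert (Hinc := incr_bound (fun i r => F1 (phi r) (x r) i - F2 (phi r) (x r) i) (c2 beta gamma mu K) t r Ht ltac:(lra) Hc2).
   assert (Hinc2 : vsum n (fun i => RInt (fun r => F1 (phi r) (x r) i - F2 (phi r) (x r) i) t r *
       RInt (fun r => F1 (phi r) (x r) i - F2 (phi r) (x r) i) t r) <= T * c2 beta gamma mu K * D).
   { apply Hinc.
     - intros i Hi. split. apply (GE (fun P X => F1 P X i - F2 P X i)); [apply cp_G; auto|lra].
       apply (GE (fun P X => (F1 P X i - F2 P X i) * (F1 P X i - F2 P X i))); [apply cp_sq, cp_G; auto|lra].
     - intros r' Hr'. apply sumG; auto. apply hK; lra. }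
   rewrite <- (vsum_ext n (fun i => (zv (x r) i - zv (x t) i) * (zv (x r) i - zv (x t) i))) in Hinc2
     by (intros i Hi; rewrite z_diff; auto; lra).
   assert (HZ : Zt <= 2 * dot n (zv (x r)) (zv (x r)) +
       2 * vsum n (fun i => (zv (x r) i - zv (x t) i) * (zv (x r) i - zv (x t) i))).
   { unfold Zt, dot. rewrite <- !vsum_scal, <- vsum_plus. apply vsum_le. intros i _.
     set (a := zv (x r) i). set (b := zv (x t) i). assert (0 <= (2 * a - b) * (2 * a - b)) by apply Rle_0_sqr. nra. }
   assert (Hq : beta * dot n (zv (x r)) (zv (x r)) <= q r).
   { simpl. unfold qf. assert (0 <= dot n (phi r) (wv thstar (x r)) * dot n (phi r) (wv thstar (x r))) by apply Rle_0_sqr. nra. }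
   nra. }
 assert (HI := int_le_bound (fun _ => beta * Zt) 2 (2 * beta * T * c2 beta gamma mu K * D) t Ht (ex_RInt_const _ _ _) Hpt).
 rewrite RI_const in HI. replace (t + T - t) with T in HI by ring. fold D in HI.
 assert (E : T * Zt = (T * (beta * Zt)) / beta) by (field; lra). rewrite E.
 apply Rmult_le_reg_l with beta; auto. replace (beta * (T * (beta * Zt) / beta)) with (T * (beta * Zt)) by (field; lra).
 replace (beta * ((2 / beta + 2 * T * T * c2 beta gamma mu K) * D)) with (2 * D + T * (2 * beta * T * c2 beta gamma mu K * D)) by (field; lra).
 lra. Qed.

Lemma pe_eq t v : t0 <= t ->
  vsum n (fun i => vsum n (fun j => v i * gram phi t T i j * v j)) =
  RInt (fun r => dot n (phi r) v * dot n (phi r) v) t (t + T).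
Proof. intros Ht.
 assert (Hex : forall i j, (i < n)%nat -> (j < n)%nat -> ex_RInt (fun r => phi r i * phi r j) t (t + T)).
 { intros i j Hi Hj. apply (GE (fun P X => P i * P j)); [|lra]. intros Pc Xc s0 HP HX HY. apply cmult; auto. }
 rewrite (RInt_ext _ (fun r => vsum n (fun i => vsum n (fun j => (v i * v j) * (phi r i * phi r j))))).
 2: { intros r _. unfold dot. rewrite vsum_mult. apply vsum_ext; intros. apply vsum_ext; intros. ring. }
 rewrite RI_vsum. apply vsum_ext. intros i Hi. rewrite RI_vsum. apply vsum_ext. intros j Hj.
 rewrite RI_scal by (apply Hex; auto). unfold gram. ring.
 intros j Hj. apply exR_scal; apply Hex; auto.
 intros i Hi. apply exR_vsum. intros j Hj. apply exR_scal; apply Hex; auto. Qed.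

Lemma w_bound t : t0 <= t ->
  delta * dot n (wv thstar (x t)) (wv thstar (x t)) <= (2 / gamma + 2 * K * T * T * c3 beta gamma K) * RInt q t (t + T).
Proof. intros Ht. set (D := RInt q t (t + T)). set (wt := wv thstar (x t)).
 assert (HD : 0 <= D) by (apply (q_int_nonneg n beta gamma mu phi thstar t0 x hbeta hgamma ht0 hsol hpc); lra).
 assert (Hc3 := c3_nonneg beta gamma K hbeta hgamma hK0).
 assert (HP := hPE t ltac:(lra) wt). rewrite pe_eq in HP by lra.
 assert (Hpt : forall r, t < r < t + T -> dot n (phi r) wt * dot n (phi r) wt <= (2 / gamma) * q r + 2 * K * T * c3 beta gamma K * D).
 { intros r Hr.
   assert (Hinc := incr_bound (fun i r => F2 (phi r) (x r) i) (c3 beta gamma K) t r Ht ltac:(lra) Hc3).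
   assert (Hinc2 : vsum n (fun i => RInt (fun r => F2 (phi r) (x r) i) t r *
       RInt (fun r => F2 (phi r) (x r) i) t r) <= T * c3 beta gamma K * D).
   { apply Hinc.
     - intros i Hi. split. apply exF2; auto; lra.
       apply (GE (fun P X => F2 P X i * F2 P X i)); [apply cp_sq, cp_F2; auto|lra].
     - intros r' Hr'. apply sumF2; auto. apply hK; lra. }
   set (dw := fun i => wv thstar (x r) i - wt i).
   rewrite <- (vsum_ext n (fun i => dw i * dw i)) in Hinc2
     by (intros i Hi; unfold dw, wt; rewrite w_diff; auto; lra).
   assert (Hsplit : dot n (phi r) wt = dot n (phi r) (wv thstar (x r)) - dot n (phi r) dw).
   { unfold dot. rewrite <- vsum_minus. apply vsum_ext. intros; unfold dw; ring. }
   set (a := dot n (phi r) (wv thstar (x r))) in *. set (b := dot n (phi r) dw) in *.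
   assert (Hb : b * b <= K * dot n dw dw).
   { eapply Rle_trans. apply CS. apply Rmult_le_compat_r. apply dot_nonneg. apply hK; lra. }
   assert (Ha : gamma * (a * a) <= q r).
   { simpl. unfold qf. fold a. assert (0 <= dot n (zv (x r)) (zv (x r))) by apply dot_nonneg. nra. }
   assert (Ha2 : a * a <= q r / gamma). { apply Rmult_le_reg_l with gamma; auto. replace (gamma * (q r / gamma)) with (q r) by (field; lra). lra. }
   assert (Hdw : K * dot n dw dw <= K * (T * c3 beta gamma K * D)) by (apply Rmult_le_compat_l; auto).
   rewrite Hsplit. assert (0 <= (a + b) * (a + b)) by apply Rle_0_sqr.
   replace (2 / gamma * q r) with (2 * (q r / gamma)) by (field; lra). nra. }
 assert (HI := int_le_bound (fun r => dot n (phi r) wt * dot n (phi r) wt) (2 / gamma) (2 * K * T * c3 beta gamma K * D) t Ht).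
 assert (Hex : ex_RInt (fun r => dot n (phi r) wt * dot n (phi r) wt) t (t + T)).
 { apply (GE (fun P X => dot n P wt * dot n P wt)); [|lra]. intros Pc Xc s0 HP1 HX HY. unfold dot. cauto. }
 specialize (HI Hex Hpt). fold D in HI. lra. Qed.

Definition Cw := (2 / gamma + 2 * K * T * T * c3 beta gamma K) / delta + (2 / beta + 2 * T * T * c2 beta gamma mu K) / T.

Lemma window t : t0 <= t -> Vf n thstar (x t) <= Cw * RInt q t (t + T).
Proof. intros Ht. assert (Hw := w_bound t Ht). assert (Hz := z_bound t Ht).
 unfold Vf, Cw. set (D := RInt q t (t + T)) in *.
 set (W := dot n (wv thstar (x t)) (wv thstar (x t))) in *. set (Z := dot n (zv (x t)) (zv (x t))) in *.
 set (A := 2 / gamma + 2 * K * T * T * c3 beta gamma K) in *. set (B := 2 / beta + 2 * T * T * c2 beta gamma mu K) in *.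
 assert (W <= A / delta * D). { apply Rmult_le_reg_l with delta; auto. replace (delta * (A / delta * D)) with (A * D) by (field; lra). lra. }
 assert (Z <= B / T * D). { apply Rmult_le_reg_l with T; auto. replace (T * (B / T * D)) with (B * D) by (field; lra). lra. }
 lra. Qed.

Lemma Cw_nonneg : 0 <= Cw.
Proof. unfold Cw. assert (H3 := c3_nonneg beta gamma K hbeta hgamma hK0). assert (H2 := c2_nonneg beta gamma mu K hbeta hgamma hmu hK0).
 assert (0 <= 2 / gamma) by (apply Rdiv_le_0_compat; lra). assert (0 <= 2 / beta) by (apply Rdiv_le_0_compat; lra).
 assert (0 <= K * T * T) by (apply Rmult_le_pos; [apply Rmult_le_pos|]; lra).
 assert (0 <= T * T) by (apply Rmult_le_pos; lra).
 assert (0 <= K * T * T * c3 beta gamma K) by (apply Rmult_le_pos; assumption).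
 assert (0 <= T * T * c2 beta gamma mu K) by (apply Rmult_le_pos; assumption).
 apply Rplus_le_le_0_compat; apply Rdiv_le_0_compat; lra. Qed.

End Win.


Definition E2 n (thstar : nat -> R) (X : (nat -> R) * (nat -> R)) :=
  dot n (vsub (fst X) thstar) (vsub (fst X) thstar) + dot n (vsub (snd X) thstar) (vsub (snd X) thstar).

Lemma V_le_E2 n thstar X : Vf n thstar X <= 3 * E2 n thstar X.
Proof. unfold Vf, E2, dot. rewrite <- vsum_plus, <- vsum_plus, <- vsum_scal. apply vsum_le. intros i _.
 unfold wv, zv, vsub. set (e := fst X i - thstar i). set (w := snd X i - thstar i).
 replace (fst X i - snd X i) with (e - w) by (unfold e, w; ring).
 assert (0 <= (e + w) * (e + w)) by apply Rle_0_sqr. nra. Qed.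

Lemma E2_le_V n thstar X : E2 n thstar X <= 3 * Vf n thstar X.
Proof. unfold Vf, E2, dot. rewrite <- vsum_plus, <- vsum_plus, <- vsum_scal. apply vsum_le. intros i _.
 unfold wv, zv, vsub. set (e := fst X i - thstar i). set (w := snd X i - thstar i).
 replace (fst X i - snd X i) with (e - w) by (unfold e, w; ring).
 assert (0 <= (e - 2 * w) * (e - 2 * w)) by apply Rle_0_sqr. nra. Qed.

Lemma E2_nonneg n thstar X : 0 <= E2 n thstar X.
Proof. unfold E2. assert (H1 := dot_nonneg n (vsub (fst X) thstar)). assert (H2 := dot_nonneg n (vsub (snd X) thstar)). lra. Qed.

Lemma err_E2 n thstar X : err_eq n thstar X = sqrt (E2 n thstar X).
Proof. reflexivity. Qed.

Lemma sqrt_lt_of u c : 0 <= u -> 0 < c -> u < c * c -> sqrt u < c.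
Proof. intros. rewrite <- (sqrt_square c) by lra. apply sqrt_lt_1_alt; lra. Qed.

Lemma lt_of_sqrt u c : 0 <= u -> 0 < c -> sqrt u < c -> u < c * c.
Proof. intros Hu Hc H. destruct (Rlt_le_dec u (c * c)); auto.
 assert (sqrt (c * c) <= sqrt u) by (apply sqrt_le_1_alt; auto). rewrite sqrt_square in H0; lra. Qed.

Theorem theorem1 (n : nat) (hn : (1 <= n)%nat) (thstar : nat -> R)
  (phi : R -> nat -> R)
  (hpc : piecewise_continuous n phi) (hpe : persistently_exciting n phi)
  (beta gamma mu : R) (hbeta : 0 < beta) (hgamma : 0 < gamma) (hmu : 0 < mu)
  (hbg : beta >= 2 * gamma / mu) :
  UGAS (is_solution n beta gamma mu phi thstar) (err_eq n thstar).
Proof.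
 assert (hbg2 : 2 * gamma <= beta * mu).
 { apply Rge_le in hbg. apply Rmult_le_compat_r with (r := mu) in hbg; [|lra].
   replace (2 * gamma / mu * mu) with (2 * gamma) in hbg by (field; lra). lra. }
 destruct hpe as [M [T [delta [hM [hT [hd [hb hPE]]]]]]].
 set (K := M * M).
 assert (hK0 : 0 <= K) by (unfold K; nra).
 assert (hK : forall t, 0 <= t -> dot n (phi t) (phi t) <= K).
 { intros t Ht. assert (H := hb t Ht). unfold vnorm in H. unfold K.
   rewrite <- (sqrt_sqrt (dot n (phi t) (phi t))) by apply dot_nonneg.
   assert (0 <= sqrt (dot n (phi t) (phi t))) by apply sqrt_pos. nra. }
 assert (HC := Cw_nonneg beta gamma mu hbeta hgamma hmu K T delta hK0 hT hd).
 set (C := Cw beta gamma mu K T delta + 1) in *.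
 set (rho := 1 - 1 / C).
 assert (HCp : 0 < C) by (unfold C; lra).
 assert (Hrho : 0 <= rho < 1).
 { unfold rho. assert (0 < 1 / C) by (apply Rdiv_lt_0_compat; lra).
   assert (1 / C <= 1). { unfold C. apply Rmult_le_reg_l with (Cw beta gamma mu K T delta + 1); [lra|].
     replace ((Cw beta gamma mu K T delta + 1) * (1 / (Cw beta gamma mu K T delta + 1))) with 1 by (field; lra). lra. }
   lra. }
 assert (Hsol : forall t0 x, 0 <= t0 -> is_solution n beta gamma mu phi thstar t0 x ->
   (forall a b, t0 <= a <= b -> Vf n thstar (x b) <= Vf n thstar (x a)) /\
   (forall k, Vf n thstar (x (t0 + INR k * T)) <= rho ^ k * Vf n thstar (x t0))).
 { intros t0 x Ht0 Hs. split.
   - intros a b Hab. apply (V_mono n beta gamma mu phi thstar t0 x hbeta hgamma hbg2 Ht0 Hs hpc a b Hab).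
   - induction k.
     + simpl. replace (t0 + 0 * T) with t0 by ring. lra.
     + set (t := t0 + INR k * T).
       assert (Ht : t0 <= t) by (unfold t; assert (0 <= INR k) by apply pos_INR; nra).
       replace (t0 + INR (S k) * T) with (t + T) by (unfold t; rewrite S_INR; ring).
       assert (Hm := mono n beta gamma mu phi thstar t0 x hgamma hbg2 Ht0 Hs hpc t (t + T) ltac:(lra)).
       assert (Hw := window n beta gamma mu phi thstar t0 x hbeta hgamma hmu Ht0 Hs hpc K T delta hK0 hK hT hd hPE t Ht).
       assert (HD := q_int_nonneg n beta gamma mu phi thstar t0 x hbeta hgamma Ht0 Hs hpc t (t + T) ltac:(lra)).
       set (D := RInt (fun r => qf n beta gamma thstar (phi r) (x r)) t (t + T)) in *.
       assert (HV0 : 0 <= Vf n thstar (x t)) by (unfold Vf; assert (H1 := dot_nonneg n (wv thstar (x t))); assert (H2 := dot_nonneg n (zv (x t))); lra).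
       assert (HVC : Vf n thstar (x t) <= C * D) by (replace (C * D) with (Cw beta gamma mu K T delta * D + D) by (unfold C; ring); lra).
       assert (HD2 : Vf n thstar (x t) / C <= D).
       { apply Rmult_le_reg_l with C; auto. replace (C * (Vf n thstar (x t) / C)) with (Vf n thstar (x t)) by (field; lra). lra. }
       assert (Hstep : Vf n thstar (x (t + T)) <= rho * Vf n thstar (x t)).
       { unfold rho. replace ((1 - 1 / C) * Vf n thstar (x t)) with (Vf n thstar (x t) - Vf n thstar (x t) / C) by (field; lra). lra. }
       simpl. assert (0 <= rho) by lra. apply Rle_trans with (rho * Vf n thstar (x t)); auto. rewrite Rmult_assoc. apply Rmult_le_compat_l; auto. }
 split; [|split].
 - intros eps Heps. exists (eps / 3). split. lra.
   intros t0 x Ht0 Hs H0 t Ht. destruct (Hsol t0 x Ht0 Hs) as [Hmono _].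
   rewrite err_E2 in *. apply lt_of_sqrt in H0; [|apply E2_nonneg|lra].
   apply sqrt_lt_of. apply E2_nonneg. auto.
   assert (H1 := E2_le_V n thstar (x t)). assert (H2 := Hmono t0 t ltac:(lra)). assert (H3 := V_le_E2 n thstar (x t0)).
   nra.
 - intros r Hr. exists (3 * r). split. lra.
   intros t0 x Ht0 Hs H0 t Ht. destruct (Hsol t0 x Ht0 Hs) as [Hmono _].
   rewrite err_E2 in *. apply lt_of_sqrt in H0; [|apply E2_nonneg|lra].
   apply sqrt_lt_of. apply E2_nonneg. lra.
   assert (H1 := E2_le_V n thstar (x t)). assert (H2 := Hmono t0 t ltac:(lra)). assert (H3 := V_le_E2 n thstar (x t0)).
   nra.
 - intros r eps Hr Heps.
   assert (Hy : 0 < eps * eps / (9 * (r * r))) by (apply Rdiv_lt_0_compat; nra).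
   destruct (pow_lt_1_zero rho ltac:(rewrite Rabs_right; lra) _ Hy) as [N HN].
   assert (HN1 := HN (S N) ltac:(lia)). rewrite Rabs_right in HN1 by (apply Rle_ge, pow_le; lra).
   exists (INR (S N) * T). split. apply Rmult_lt_0_compat; [apply lt_0_INR; lia|lra].
   intros t0 x Ht0 Hs H0 t Ht. destruct (Hsol t0 x Ht0 Hs) as [Hmono Hdec].
   rewrite err_E2 in *. apply lt_of_sqrt in H0; [|apply E2_nonneg|lra].
   apply sqrt_lt_of. apply E2_nonneg. auto.
   assert (H1 := E2_le_V n thstar (x t)).
   assert (H2 := Hmono (t0 + INR (S N) * T) t ltac:(assert (0 <= INR (S N)) by apply pos_INR; nra)).
   assert (H3 := Hdec (S N)). assert (H4 := V_le_E2 n thstar (x t0)).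
   assert (H5 := E2_nonneg n thstar (x t0)).
   assert (Hp : 0 <= rho ^ S N) by (apply pow_le; lra).
   assert (rho ^ S N * (9 * (r * r)) < eps * eps).
   { apply Rmult_lt_compat_r with (r := 9 * (r * r)) in HN1; [|nra].
     replace (eps * eps / (9 * (r * r)) * (9 * (r * r))) with (eps * eps) in HN1 by (field; lra). lra. }
   assert (E2 n thstar (x t) <= 9 * (rho ^ S N * E2 n thstar (x t0))).
   { assert (Vf n thstar (x t) <= rho ^ S N * Vf n thstar (x t0)) by lra.
     assert (rho ^ S N * Vf n thstar (x t0) <= rho ^ S N * (3 * E2 n thstar (x t0))) by (apply Rmult_le_compat_l; lra).
     lra. }
   assert (rho ^ S N * E2 n thstar (x t0) <= rho ^ S N * (r * r)) by (apply Rmult_le_compat_l; lra).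
   lra.
Qed.
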